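(* Every star gallery is normal.
   Context: An art gallery $\Gamma$ is a simple polygon in the plane (closed region: boundary together with interior), whose boundary (the walls) consists of finitely many line segments. A guard is a point of $\Gamma$; a guard $G$ visually covers $A\in\Gamma$ if the segment $GA$ lies entirely in $\Gamma$. A configuration of guards is a set $F$ of points of $\Gamma$; it visually covers $X\subseteq\Gamma$ if each point of $X$ is visually covered by some guard in $F$. $\Gamma$ is normal if every configuration of guards visually covering the walls visually covers all of $\Gamma$. $\Gamma$ is a star gallery if there is a point $P\in\Gamma$ such that for every $X\in\Gamma$ the segment $PX$ lies in $\Gamma$. *)

(* Defs.v *)
From Stdlib Require Import Reals Lra Lia List Arith.
Import ListNotations.
Open Scope R_scope.

Definition point : Type := (R * R)%type.

Definition lerp (a b : point) (t : R) : point :=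
  ((1 - t) * fst a + t * fst b, (1 - t) * snd a + t * snd b).

Definition on_seg (a b p : point) : Prop :=
  exists t, 0 <= t <= 1 /\ p = lerp a b t.

(** A polygon is given by its list of vertices v_0, ..., v_{n-1};
    its walls are the segments [v_i, v_{(i+1) mod n}]. *)
Definition vtx (vs : list point) (i : nat) : point := nth i vs (0, 0).
Definition nxt (vs : list point) (i : nat) : nat := Nat.modulo (S i) (length vs).

Definition on_edge (vs : list point) (i : nat) (p : point) : Prop :=
  on_seg (vtx vs i) (vtx vs (nxt vs i)) p.

Definition simple_polygon (vs : list point) : Prop :=
  (3 <= length vs)%nat /\
  (forall i, (i < length vs)%nat -> vtx vs i <> vtx vs (nxt vs i)) /\
  (forall i j, (i < length vs)%nat -> (j < length vs)%nat -> i <> j ->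
     j = nxt vs i ->
     forall p, on_edge vs i p -> on_edge vs j p -> p = vtx vs j) /\
  (forall i j, (i < length vs)%nat -> (j < length vs)%nat -> i <> j ->
     j <> nxt vs i -> i <> nxt vs j ->
     forall p, on_edge vs i p -> on_edge vs j p -> False).

Definition on_boundary (vs : list point) (p : point) : Prop :=
  exists i, (i < length vs)%nat /\ on_edge vs i p.

Fixpoint path_avoids (vs : list point) (x : point) (ps : list point) : Prop :=
  match ps with
  | [] => True
  | y :: ps' =>
      (forall p, on_seg x y p -> ~ on_boundary vs p) /\ path_avoids vs y ps'
  end.

Definition norm2 (p : point) : R := fst p * fst p + snd p * snd p.

(** x is in the unbounded component of the complement of the boundary:
    from x one can reach arbitrarily far points without crossing the walls. *)
Definition exterior (vs : list point) (x : point) : Prop :=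
  ~ on_boundary vs x /\
  forall M : R, exists ps : list point,
    path_avoids vs x ps /\ M < norm2 (last ps x).

(** The gallery: closed region = boundary together with interior,
    i.e. the complement of the exterior. *)
Definition gallery (vs : list point) (x : point) : Prop := ~ exterior vs x.

Definition seg_in (vs : list point) (a b : point) : Prop :=
  forall p, on_seg a b p -> gallery vs p.

Definition covers (vs : list point) (g a : point) : Prop := seg_in vs g a.

Definition config_covers (vs : list point) (F X : point -> Prop) : Prop :=
  forall a, X a -> exists g, F g /\ covers vs g a.

Definition normal_gallery (vs : list point) : Prop :=
  forall F : point -> Prop,
    (forall g, F g -> gallery vs g) ->
    config_covers vs F (on_boundary vs) ->
    config_covers vs F (gallery vs).

Definition star_gallery (vs : list point) : Prop :=
  exists P, gallery vs P /\ forall X, gallery vs X -> seg_in vs P X.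

(* Main.v *)
Require Import Defs.
From Stdlib Require Import Reals Lra Lia List Arith Psatz Classical.
Import ListNotations.
Open Scope R_scope.

Lemma tri (vs : list point) (P G B X : point) :
  (forall Y, gallery vs Y -> seg_in vs P Y) ->
  seg_in vs G B -> on_seg P B X -> seg_in vs G X.
Proof.
  intros Hstar HGB [s [Hs ->]] p [u [Hu ->]].
  destruct P as [p1 p2], G as [g1 g2], B as [b1 b2].
  set (w := (1 - u) + u * s).
  destruct (Req_dec w 0) as [Hw|Hw].
  - assert (u = 1) by (unfold w in Hw; nra). assert (s = 0) by (subst u; unfold w in Hw; nra).
    subst. apply (Hstar (g1,g2)). apply HGB. exists 0. split; [lra|].
    unfold lerp; simpl; f_equal; ring.
    exists 0. split; [lra|]. unfold lerp; simpl; f_equal; ring.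
  - assert (Hw0 : 0 < w) by (unfold w in *; nra).
    set (Y := lerp (g1,g2) (b1,b2) (u * s / w)).
    apply (Hstar Y).
    + apply HGB. exists (u*s/w). split; [|reflexivity].
      split. apply Rmult_le_pos; [nra|left; apply Rinv_0_lt_compat; lra].
      apply (Rmult_le_reg_r w); [lra|]. unfold Rdiv; rewrite Rmult_assoc, Rinv_l; [|lra]; unfold w; nra.
    + exists w. split; [unfold w; nra|].
      unfold Y, lerp; simpl. unfold w in *. f_equal; field; lra.
Qed.

Theorem theorem2 (vs : list point) :
  simple_polygon vs -> star_gallery vs -> normal_gallery vs.
Proof.
  intros Hs [P [HP Hstar]] F HF Hcov X HX.
  assert (HB : exists B, on_boundary vs B /\ on_seg P B X).
  { destruct (classic (exists t, 1 <= t /\ on_boundary vs (lerp P X t))) as [[t [Ht Hb]]|Hn].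
    - exists (lerp P X t). split; auto. exists (/ t). split.
      split. left; apply Rinv_0_lt_compat; lra.
      rewrite <- Rinv_1. apply Rinv_le_contravar; lra.
      destruct P, X; unfold lerp; simpl; f_equal; field; lra.
    - destruct (classic (X = P)) as [->|HXP].
      + exists (vtx vs 0). split.
        * exists 0%nat. destruct Hs as [H3 _]. split; [lia|].
          exists 0. split; [lra|]. destruct (vtx vs 0); unfold lerp; simpl; f_equal; ring.
        * exists 0. split; [lra|]. destruct P; unfold lerp; simpl; f_equal; ring.
      + exfalso. apply HX. split.
        * intro Hb. apply Hn. exists 1. split; [lra|].
          replace (lerp P X 1) with X; auto.
          destruct P, X; unfold lerp; simpl; f_equal; ring.
        * intro M.
          destruct P as [p1 p2], X as [x1 x2].
          set (d1 := x1 - p1). set (d2 := x2 - p2).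
          set (D := d1*d1 + d2*d2). set (c := Rabs (p1*d1 + p2*d2)).
          assert (HD : 0 < D).
          { unfold D. destruct (Req_dec d1 0).
            - destruct (Req_dec d2 0).
              + exfalso; apply HXP; unfold d1, d2 in *; f_equal; lra.
              + nra.
            - nra. }
          assert (Hc : 0 <= c) by apply Rabs_pos.
          set (t := 1 + (Rabs M + 2 * c) / D).
          assert (Hq : 0 <= (Rabs M + 2 * c) / D).
          { apply Rmult_le_pos. pose proof (Rabs_pos M); lra. left; apply Rinv_0_lt_compat; lra. }
          assert (HtD : t * D = D + Rabs M + 2 * c) by (unfold t; field; lra).
          exists [lerp (p1,p2) (x1,x2) t]. split.
          -- simpl. split; auto. intros p [r [Hr ->]] Hb. apply Hn.
             exists (1 + r * (t - 1)). split. unfold t; nra.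
             replace (lerp (p1, p2) (x1, x2) (1 + r * (t - 1))) with
               (lerp (x1, x2) (lerp (p1, p2) (x1, x2) t) r); auto.
             unfold lerp; simpl; f_equal; ring.
          -- simpl. unfold norm2, lerp; simpl.
             assert (E : ((1 - t) * p1 + t * x1) * ((1 - t) * p1 + t * x1) +
                ((1 - t) * p2 + t * x2) * ((1 - t) * p2 + t * x2)
                = t*t*D + 2*t*(p1*d1+p2*d2) + (p1*p1+p2*p2)) by (unfold D, d1, d2; ring).
             rewrite E.
             pose proof (Rle_abs (-(p1*d1+p2*d2))) as Ha.
             rewrite Rabs_Ropp in Ha. fold c in Ha.
             pose proof (Rle_abs M).
             assert (1 <= t) by (unfold t; lra).
             assert (t * t * D = t * (D + Rabs M + 2 * c)) by (rewrite <- HtD; ring).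
             assert (2 * t * (p1*d1+p2*d2) >= - (2 * t * c)).
             { assert (0 <= 2 * t * (p1*d1+p2*d2 + c)) by (apply Rmult_le_pos; lra). lra. }
             assert (t * (D + Rabs M) >= D + Rabs M).
             { assert (0 <= (t - 1) * (D + Rabs M)) by (apply Rmult_le_pos; pose proof (Rabs_pos M); lra). lra. }
             assert (0 <= p1*p1+p2*p2) by nra.
             assert (t * t * D = t * (D + Rabs M) + 2 * t * c) by lra.
             lra. }
  destruct HB as [B [HB HPB]].
  destruct (Hcov B HB) as [G [HFG HGB]].
  exists G. split; auto. eapply tri; eauto.
Qed.
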